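(* Let $P$ and $Q$ be broken combs, and let $(P,c,x)$ and $(Q,c',x')$ be $n$-generated models on them, rooted at their roots, which are $3$-bisimilar. Then they are (fully) bisimilar.
   Context: An $n$-comb is a poset $\{x_1,\dots,x_n\}\sqcup\{y_1,\dots,y_n\}$ where $y_i\le z$ iff $y_i=z$, and $x_i\le z$ iff $z=x_j$ with $i\le j$ or $z=y_j$ with $i\le j$. A broken comb is a subposet of some $n$-comb containing all of $x_1,\dots,x_n$. A model over $n$ is a finite rooted poset with an order-preserving colouring into subsets of $\{p_1,\dots,p_n\}$; it is $n$-generated if no two distinct points generate bisimilar rooted submodels. Bisimulation: a relation relating the roots, preserving colours, with forth and back conditions along $\le$. $k$-bisimulation: relations $S_k\subseteq\dots\subseteq S_0$, roots related by $S_k$, $S_0$ colour-preserving, forth and back conditions from $S_{j+1}$ to $S_j$ for $j<k$. *)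

(* Defs.v *)
From mathcomp Require Import all_boot.
Set Implicit Arguments. Unset Strict Implicit. Unset Printing Implicit Defensive.

(* A (pointed) model: a carrier T, an order relation le, a colouring
   c : T -> {set 'I_n} (the subset of {p_1,...,p_n} true at a point). *)

Section Models.
Variable n : nat.
Implicit Types T : Type.

Definition is_root (T : Type) (le : rel T) (r : T) : Prop := forall a, le r a.

Definition is_model (T : finType) (le : rel T) (c : T -> {set 'I_n}) : Prop :=
  [/\ reflexive le, antisymmetric le, transitive le,
      (exists r, is_root le r) &
      (forall a b, le a b -> c a \subset c b)].

Definition colour_pres (T1 T2 : Type) (c1 : T1 -> {set 'I_n})
  (c2 : T2 -> {set 'I_n}) (Z : T1 -> T2 -> Prop) : Prop :=
  forall a b, Z a b -> c1 a = c2 b.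

Definition forth (T1 T2 : Type) (le1 : rel T1) (le2 : rel T2)
  (Z Z' : T1 -> T2 -> Prop) : Prop :=
  forall a b a', Z a b -> le1 a a' -> exists b', le2 b b' /\ Z' a' b'.

Definition back (T1 T2 : Type) (le1 : rel T1) (le2 : rel T2)
  (Z Z' : T1 -> T2 -> Prop) : Prop :=
  forall a b b', Z a b -> le2 b b' -> exists a', le1 a a' /\ Z' a' b'.

Definition bisimilar (T1 T2 : Type) (le1 : rel T1) (c1 : T1 -> {set 'I_n})
  (r1 : T1) (le2 : rel T2) (c2 : T2 -> {set 'I_n}) (r2 : T2) : Prop :=
  exists Z : T1 -> T2 -> Prop,
    [/\ Z r1 r2, colour_pres c1 c2 Z, forth le1 le2 Z Z & back le1 le2 Z Z].

Definition k_bisimilar (k : nat) (T1 T2 : Type) (le1 : rel T1)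
  (c1 : T1 -> {set 'I_n}) (r1 : T1) (le2 : rel T2) (c2 : T2 -> {set 'I_n})
  (r2 : T2) : Prop :=
  exists S : nat -> T1 -> T2 -> Prop,
    [/\ (forall j, j < k -> forall a b, S j.+1 a b -> S j a b),
        S k r1 r2,
        colour_pres c1 c2 (S 0) &
        (forall j, j < k -> forth le1 le2 (S j.+1) (S j) /\
                            back le1 le2 (S j.+1) (S j))].

Definition gen_pt (T : Type) (le : rel T) (w : T) := {v : T | le w v}.
Definition gen_le (T : Type) (le : rel T) (w : T) : rel (gen_pt le w) :=
  fun a b => le (val a) (val b).
Definition gen_col (T : Type) (le : rel T) (c : T -> {set 'I_n}) (w : T)
  : gen_pt le w -> {set 'I_n} := fun a => c (val a).

Definition n_generated (T : Type) (le : rel T) (c : T -> {set 'I_n}) : Prop :=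
  forall (w v : T) (hw : le w w) (hv : le v v),
    bisimilar (@gen_le T le w) (@gen_col T le c w) (exist _ w hw)
              (@gen_le T le v) (@gen_col T le c v) (exist _ v hv) -> w = v.

End Models.

(* The m-comb: points inl i = x_(i+1), inr i = y_(i+1), for i < m. *)
Definition comb_pt (m : nat) := ('I_m + 'I_m)%type.

Definition comb_le (m : nat) : rel (comb_pt m) := fun a b =>
  match a, b with
  | inl i, inl j => (i <= j)%N
  | inl i, inr j => (i <= j)%N
  | inr i, inr j => i == j
  | inr _, inl _ => false
  end.

Definition broken_comb (m : nat) (A : {set comb_pt m}) : Prop :=
  forall i : 'I_m, inl i \in A.

Definition bc_pt (m : nat) (A : {set comb_pt m}) := {a : comb_pt m | a \in A}.
Definition bc_le (m : nat) (A : {set comb_pt m}) : rel (bc_pt A) :=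
  fun a b => comb_le (val a) (val b).
Arguments bc_le {m} A.

(* Main.v *)
Require Import Defs.
From mathcomp Require Import all_boot.
Set Implicit Arguments. Unset Strict Implicit. Unset Printing Implicit Defensive.

Definition upC (n:nat) (T : finType) (le : rel T) (c : T -> {set 'I_n}) (u : T)
  : {set {set 'I_n}} := c @: [set w | le u w].
Definition t1 (n:nat) (T : finType) (le : rel T) (c : T -> {set 'I_n}) (u : T)
  : ({set 'I_n} * {set {set 'I_n}}) := (c u, upC le c u).
Definition upD (n:nat) (T : finType) (le : rel T) (c : T -> {set 'I_n}) (u : T)
  := (t1 le c) @: [set w | le u w].

Lemma imset_bisim (T1 T2 : finType) (le1: rel T1) (le2: rel T2)
  (Z Z' : T1 -> T2 -> Prop) (R : finType) (f1 : T1 -> R) (f2 : T2 -> R) :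
  forth le1 le2 Z Z' -> back le1 le2 Z Z' -> (forall x y, Z' x y -> f1 x = f2 y) ->
  forall a b, Z a b -> f1 @: [set w | le1 a w] = f2 @: [set w | le2 b w].
Proof.
move=> Hf Hb Hfe a b Zab; apply/setP=> s; apply/imsetP/imsetP=> -[w].
- rewrite inE => Hw ->. have [b' [Hb' HZ']] := Hf _ _ _ Zab Hw.
  exists b'; first by rewrite inE. exact: Hfe.
- rewrite inE => Hw ->. have [a' [Ha' HZ']] := Hb _ _ _ Zab Hw.
  exists a'; first by rewrite inE. by rewrite (Hfe _ _ HZ').
Qed.

Lemma L1 n (T : finType) (le : rel T) (c : T -> {set 'I_n}) (z w : T) s :
  is_model le c -> n_generated le c -> upC le c z = [set s] -> upC le c w = [set s] -> z = w.
Proof.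
move=> [Hr _ _ _ _] Hng Hz Hw.
apply: (Hng z w (Hr z) (Hr w)).
exists (fun _ _ => True); split => //.
- move=> a b _; rewrite /gen_col.
  have : c (val a) \in upC le c z by apply: imset_f; rewrite inE; exact: (valP a).
  have : c (val b) \in upC le c w by apply: imset_f; rewrite inE; exact: (valP b).
  by rewrite Hz Hw !inE => /eqP -> /eqP ->.
- move=> a b a' _ _; exists b; split => //; exact: Hr.
- move=> a b b' _ _; exists a; split => //; exact: Hr.
Qed.

Lemma Lgen n (T : finType) (le : rel T) (c : T -> {set 'I_n}) (z w : T) :
  is_model le c -> n_generated le c -> c z = c w -> le z w ->
  (forall a, le z a -> a = z \/ le w a) -> z = w.
Proof.
move=> [Hr _ Ht _ _] Hng Hc Hzw Hup.
apply: (Hng z w (Hr z) (Hr w)).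
exists (fun a b => val a = val b \/ (val a = z /\ val b = w)); split.
- by right.
- by move=> a b [E|[E1 E2]]; rewrite /gen_col ?E ?E1 ?E2.
- move=> a b a' [Eab|[Ea Eb]] Haa'.
  + have Hb' : le w (val a').
      apply: (Ht (val a)) => //; rewrite Eab; exact: (valP b).
    exists (exist _ (val a') Hb'); split; last by left.
    rewrite /gen_le /= -Eab; exact: Haa'.
  + case: (Hup (val a') (valP a')) => [E|H].
    * exists b; split; [exact: Hr | right; split => //].
    * exists (exist _ (val a') H); split; last by left.
      rewrite /gen_le /= Eb; exact: H.
- move=> a b b' [Eab|[Ea Eb]] Hbb'.
  + have Ha' : le z (val b').
      apply: (Ht (val a)); first exact: (valP a). by rewrite Eab.
    exists (exist _ (val b') Ha'); split; last by left.
    by rewrite /gen_le /= Eab.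
  + have Ha' : le z (val b') by apply: (Ht w) => //; exact: (valP b').
    exists (exist _ (val b') Ha'); split; last by left.
    rewrite /gen_le /= Ea; exact: Ha'.
Qed.

Lemma upD_mono n (T : finType) (le : rel T) (c : T -> {set 'I_n}) (a b : T) :
  transitive le -> le a b -> upD le c b \subset upD le c a.
Proof.
move=> Ht Hab; apply/subsetP => t /imsetP [x]; rewrite inE => Hx ->.
apply: imset_f; rewrite inE; exact: Ht Hab Hx.
Qed.

Lemma inD n (T : finType) (le : rel T) (c : T -> {set 'I_n}) (x v : T) :
  t1 le c x \in upD le c v -> exists z, le v z /\ c z = c x /\ upC le c z = upC le c x.
Proof.
move=> /imsetP [z]; rewrite inE => Hz [E1 E2]; exists z; split => //.
Qed.

Lemma tooth m (A : {set comb_pt m}) (y : bc_pt A) k :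
  val y = inr k -> forall x, bc_le A y x -> x = y.
Proof.
move=> Ey x; rewrite /bc_le Ey; case: x => [[l|l] Hl] //= /eqP E.
apply: val_inj; by rewrite /= Ey E.
Qed.

Lemma toothC n m (A : {set comb_pt m}) (c : bc_pt A -> {set 'I_n}) (y : bc_pt A) k :
  is_model (bc_le A) c -> val y = inr k -> upC (bc_le A) c y = [set c y].
Proof.
move=> [Hr _ _ _ _] Ey; apply/setP => s; rewrite inE; apply/imsetP/eqP.
- by move=> [x]; rewrite inE => /(tooth Ey) -> ->.
- move=> ->; exists y => //; rewrite inE; exact: Hr.
Qed.

Lemma P1 n m (A : {set comb_pt m}) (HA : broken_comb A) (c : bc_pt A -> {set 'I_n}) :
  is_model (bc_le A) c -> n_generated (bc_le A) c ->
  forall u w, upD (bc_le A) c w \subset upD (bc_le A) c u -> bc_le A u w.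
Proof.
move=> Hm Hng u w Hsub.
have Hm' := Hm; case: Hm' => Hr _ Ht _ Hcm.
have Htw : t1 (bc_le A) c w \in upD (bc_le A) c u.
  by apply: (subsetP Hsub); apply: imset_f; rewrite inE; exact: Hr.
have [z [Huz [Hcz HCz]]] := inD Htw.
case Ew: (val w) => [k|k].
- case Eu: (val u) => [i|i].
  + rewrite /bc_le Eu Ew /=; case: (leqP i k) => // Hki.
    have Hk1 : k.+1 < m := leq_ltn_trans Hki (ltn_ord i).
    pose x1 : bc_pt A := exist _ (inl (Ordinal Hk1)) (HA _).
    have Hwx1 : bc_le A w x1 by rewrite /bc_le Ew /= leqnSn.
    have Hx1u : bc_le A x1 u by rewrite /bc_le Eu /=.
    have Hsub' := subset_trans Hsub (upD_mono c Ht Hx1u).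
    have Ht1 : t1 (bc_le A) c w \in upD (bc_le A) c x1.
      by apply: (subsetP Hsub'); apply: imset_f; rewrite inE; exact: Hr.
    have [z1 [Hxz1 [Hcz1 _]]] := inD Ht1.
    have Hcx : c w = c x1.
      apply/eqP; rewrite eqEsubset (Hcm _ _ Hwx1) /= -Hcz1; exact: Hcm.
    case Hy: (inr k \in A).
    * pose y : bc_pt A := exist _ (inr k) Hy.
      have Hwy : bc_le A w y by rewrite /bc_le Ew /=.
      have Hty : t1 (bc_le A) c y \in upD (bc_le A) c x1.
        apply: (subsetP Hsub'); apply: imset_f; by rewrite inE.
      have [z2 [Hxz2 [_ HCz2]]] := inD Hty.
      have Ey : val y = inr k by [].
      have := L1 Hm Hng (etrans HCz2 (toothC Hm Ey)) (toothC Hm Ey).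
      move=> E; move: Hxz2; rewrite E /bc_le /=. by rewrite ltnn.
    * have Hwx : w = x1.
        apply: (Lgen Hm Hng Hcx Hwx1) => a.
        rewrite /bc_le Ew; case: a => [[l|l] Ha] /=; rewrite leq_eqVlt => /orP [/eqP E|Hlt].
        -- left; apply: val_inj; rewrite /= Ew; congr inl; exact: val_inj.
        -- by right.
        -- exfalso; have El : l = k by apply: val_inj.
           by move: Ha; rewrite El Hy.
        -- by right.
      move: Ew; rewrite Hwx /= => -[] /(congr1 (@nat_of_ord _)) /= E. by move/eqP: E; rewrite ?(gtn_eqF (ltnSn k)) ?(ltn_eqF (ltnSn k)).
  + have Ezu := tooth Eu Huz; rewrite Ezu in HCz.
    have Huw := L1 Hm Hng (toothC Hm Eu) (etrans (esym HCz) (toothC Hm Eu)).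
    rewrite -Huw; exact: Hr.
- have Hzw := L1 Hm Hng (etrans HCz (toothC Hm Ew)) (toothC Hm Ew).
  by rewrite -Hzw.
Qed.

Theorem mainTheorem9 (n m m' : nat)
  (A : {set comb_pt m}) (A' : {set comb_pt m'})
  (HA : broken_comb A) (HA' : broken_comb A')
  (c : bc_pt A -> {set 'I_n}) (c' : bc_pt A' -> {set 'I_n})
  (r : bc_pt A) (r' : bc_pt A') :
  is_model (bc_le A) c -> is_model (bc_le A') c' ->
  n_generated (bc_le A) c -> n_generated (bc_le A') c' ->
  is_root (bc_le A) r -> is_root (bc_le A') r' ->
  k_bisimilar 3 (bc_le A) c r (bc_le A') c' r' ->
  bisimilar (bc_le A) c r (bc_le A') c' r'.
Proof.
move=> Hm Hm' Hng Hng' Hrt Hrt' [S [Hmon Hroot Hcol Hfb]].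
have Ht : transitive (bc_le A) by case: Hm.
have Ht' : transitive (bc_le A') by case: Hm'.
have H10 := Hmon 0 isT. have H21 := Hmon 1 isT. have H32 := Hmon 2 isT.
have HC1 : forall a b, S 1 a b -> upC (bc_le A) c a = upC (bc_le A') c' b.
  exact: (imset_bisim (Hfb 0 isT).1 (Hfb 0 isT).2 Hcol).
have Ht1 : forall a b, S 1 a b -> t1 (bc_le A) c a = t1 (bc_le A') c' b.
  by move=> a b H; rewrite /t1 (Hcol _ _ (H10 _ _ H)) (HC1 _ _ H).
have HD2 : forall a b, S 2 a b -> upD (bc_le A) c a = upD (bc_le A') c' b.
  exact: (imset_bisim (Hfb 1 isT).1 (Hfb 1 isT).2 Ht1).
have Hc2 : forall a b, S 2 a b -> c a = c' b.
  by move=> a b H; apply: Hcol; apply: H10; apply: H21.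
exists (fun u v => c u = c' v /\ upD (bc_le A) c u = upD (bc_le A') c' v); split.
- have H := H32 _ _ Hroot; split; [exact: Hc2 | exact: HD2].
- by move=> a b [].
- move=> u v u' [_ HD] Huu'.
  have [v' [_ S2]] := (Hfb 2 isT).1 r r' u' Hroot (Hrt u').
  exists v'; split; last by split; [exact: Hc2 | exact: HD2].
  apply: (P1 HA' Hm' Hng'); rewrite -(HD2 _ _ S2) -HD; exact: upD_mono.
- move=> u v v' [_ HD] Hvv'.
  have [u' [_ S2]] := (Hfb 2 isT).2 r r' v' Hroot (Hrt' v').
  exists u'; split; last by split; [exact: Hc2 | exact: HD2].
  apply: (P1 HA Hm Hng); rewrite (HD2 _ _ S2) HD; exact: upD_mono.
Qed.
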